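(* Let $m \in \mathbb{N}$, $k \geq 4$ and $|q - q_k| < q_k^{-(m+2)k-3}$. Define $\epsilon_q$ by $1 = \pi_q((1^{k-1}0)^\infty) + \epsilon_q$. Then $$-q_k^{-(m+1)k+1} < \epsilon_q < q_k^{-(m+2)k+1}.$$
   Context: $q_k$ is the unique root in $(1,2)$ of $x^k - x^{k-1} - \cdots - x - 1 = 0$. $\pi_q((\epsilon_j)_{j\ge1}) = \sum_{j\ge1}\epsilon_j q^{-j}$, and $(1^{k-1}0)^\infty$ is the periodic sequence repeating the word of $k-1$ ones followed by a zero. *)

(* Defs.v *)
From Stdlib Require Import Reals Lra Lia.
From Coquelicot Require Import Coquelicot.
Open Scope R_scope.

(* x is a root of x^k - x^(k-1) - ... - x - 1 lying in (1,2);
   for k >= 2 there is exactly one such root, namely q_k. *)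
Definition is_qk (k : nat) (x : R) : Prop :=
  1 < x < 2 /\ x ^ k - sum_f_R0 (fun i => x ^ i) (k - 1) = 0.

(* pi_q((eps_j)_{j>=1}) = sum_{j>=1} eps_j q^{-j}; eps is indexed from 1. *)
Definition pi_q (q : R) (eps : nat -> R) : R :=
  Series (fun n => eps (S n) / q ^ (S n)).

(* (1^{k-1} 0)^infinity, 1-indexed: eps_j = 0 iff k divides j, else 1. *)
Definition per_seq (k : nat) (j : nat) : R :=
  if Nat.eqb (j mod k) 0 then 0 else 1.

Definition eps_q (k : nat) (q : R) : R := 1 - pi_q q (per_seq k).

(* Main.v *)
Require Import Defs.
From Stdlib Require Import Reals Lra Lia.
From Coquelicot Require Import Coquelicot.
Open Scope R_scope.

Lemma per_seq_01 k j : 0 <= per_seq k j <= 1.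
Proof. unfold per_seq; destruct (Nat.eqb _ _); lra. Qed.

Lemma per_seq_shift k n : per_seq k (S (k + n)) = per_seq k (S n).
Proof.
  unfold per_seq. replace (S (k + n)) with (S n + 1 * k)%nat by lia.
  now rewrite Nat.Div0.mod_add.
Qed.

Lemma series_per k x : (1 <= k)%nat -> 0 < x < 1 ->
  Series (fun n => per_seq k (S n) * x ^ (S n)) * (1 - x ^ k)
  = sum_f_R0 (fun n => per_seq k (S n) * x ^ (S n)) (pred k).
Proof.
  intros Hk Hx.
  set (a := fun n => per_seq k (S n) * x ^ (S n)).
  assert (Hex : ex_series a).
  { apply (@ex_series_le R_AbsRing R_CompleteNormedModule _ (fun n => x ^ n)).
    - intro n. change (norm (a n)) with (Rabs (a n)). unfold a.
      pose proof (per_seq_01 k (S n)).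
      assert (0 <= x ^ n) by (apply pow_le; lra).
      rewrite Rabs_right.
      + simpl. assert (0 <= per_seq k (S n) * x <= 1) by nra.
        assert (0 <= (1 - per_seq k (S n) * x) * x ^ n) by nra. nra.
      + simpl. apply Rle_ge. apply Rmult_le_pos; [lra|]. nra.
    - eexists. apply is_series_geom. rewrite Rabs_right; lra. }
  pose proof (Series_incr_n a k ltac:(lia) Hex) as H.
  assert (Hs : Series (fun n => a (k + n)%nat) = x ^ k * Series a).
  { rewrite <- Series_scal_l. apply Series_ext. intro n. unfold a.
    rewrite per_seq_shift. replace (S (k + n)) with (k + S n)%nat by lia.
    rewrite pow_add. ring. }
  rewrite Hs in H. lra.
Qed.

Lemma sum_per j x :
  sum_f_R0 (fun n => per_seq (S (S j)) (S n) * x ^ (S n)) (S j)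
  = x * sum_f_R0 (fun n => x ^ n) j.
Proof.
  simpl sum_f_R0 at 1.
  assert (H0 : per_seq (S (S j)) (S (S j)) = 0).
  { unfold per_seq. rewrite Nat.Div0.mod_same. reflexivity. }
  rewrite H0, Rmult_0_l, Rplus_0_r.
  rewrite scal_sum. apply sum_eq. intros i Hi.
  unfold per_seq. rewrite Nat.mod_small by lia. simpl. ring.
Qed.

Lemma eps_closed j q : 1 < q ->
  let x := / q in
  eps_q (S (S j)) q * ((1 - x) * (1 - x ^ (S (S j)))) = 1 - 2 * x + x ^ (S (S (S j))).
Proof.
  intros Hq x.
  assert (Hx : 0 < x < 1).
  { unfold x. split. apply Rinv_0_lt_compat; lra.
    rewrite <- Rinv_1. apply Rinv_lt_contravar; lra. }
  unfold eps_q, pi_q.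
  assert (E : Series (fun n => per_seq (S (S j)) (S n) / q ^ S n)
             = Series (fun n => per_seq (S (S j)) (S n) * x ^ S n)).
  { apply Series_ext. intro n. unfold x. rewrite pow_inv. reflexivity. }
  rewrite E. clearbody x.
  pose proof (series_per (S (S j)) x ltac:(lia) Hx) as H.
  simpl pred in H. rewrite sum_per, tech3 in H by lra.
  revert H; generalize (Series (fun n => per_seq (S (S j)) (S n) * x ^ S n)); intros T H.
  assert (Hk : x ^ S (S j) < 1).
  { apply pow_lt_1_compat; [lra | lia]. }
  assert (Hxk: 0 <= x ^ S (S j)) by (apply pow_le; lra).
  assert (T = x * ((1 - x ^ S j) / (1 - x)) / (1 - x ^ S (S j))).
  { rewrite <- H. field. lra. }
  rewrite H0. replace (x ^ S (S (S j))) with (x * x * x ^ S j) by (simpl; ring).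
  replace (x ^ S (S j)) with (x * x ^ S j) in * by (simpl; ring).
  field. split; lra.
Qed.

Lemma pow_diff a b c n : 0 <= a <= c -> 0 <= b <= c ->
  Rabs (a ^ S n - b ^ S n) <= INR (S n) * Rabs (a - b) * c ^ n.
Proof.
  intros Ha Hb. induction n as [|n IH].
  - simpl. replace (a * 1 - b * 1) with (a - b) by ring. lra.
  - replace (a ^ S (S n) - b ^ S (S n)) with (a * (a ^ S n - b ^ S n) + b ^ S n * (a - b)) by (simpl; ring).
    eapply Rle_trans; [apply Rabs_triang|]. rewrite !Rabs_mult.
    rewrite (Rabs_right a) by lra. rewrite (Rabs_right (b ^ S n)) by (apply Rle_ge, pow_le; lra).
    assert (b ^ S n <= c ^ S n) by (apply pow_incr; lra).
    assert (0 <= Rabs (a - b)) by apply Rabs_pos.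
    assert (0 <= c ^ n) by (apply pow_le; lra).
    assert (0 <= Rabs (a ^ S n - b ^ S n)) by apply Rabs_pos.
    assert (a * Rabs (a ^ S n - b ^ S n) <= c * (INR (S n) * Rabs (a - b) * c ^ n)).
    { apply Rmult_le_compat; lra. }
    assert (b ^ S n * Rabs (a - b) <= c ^ S n * Rabs (a - b)) by nra.
    rewrite S_INR. simpl pow in *. nra.
Qed.

Lemma small_pow j : INR (j + 5) * (55/100) ^ (j + 4) <= 1.
Proof.
  induction j as [|j IH].
  - simpl. lra.
  - replace (S j + 5)%nat with (S (j + 5)) by lia.
    replace (S j + 4)%nat with (S (j + 4)) by lia.
    rewrite S_INR. simpl pow.
    assert (0 <= INR j) by apply pos_INR.
    rewrite plus_INR in *. simpl INR in *.
    assert (0 <= (55/100) ^ (j + 4)) by (apply pow_le; lra).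
    nra.
Qed.

Lemma qk_eq k qk : (1 <= k)%nat -> is_qk k qk -> qk ^ k * (2 - qk) = 1.
Proof.
  intros Hk [[H1 H2] H]. rewrite tech3 in H by lra.
  replace (S (k - 1)) with k in H by lia.
  assert (1 - qk <> 0) by lra.
  apply (Rmult_eq_compat_r (1 - qk)) in H.
  unfold Rdiv in H. rewrite Rmult_minus_distr_r, Rmult_assoc, Rinv_l, Rmult_0_l in H by lra.
  lra.
Qed.

Lemma qk_big k qk : (4 <= k)%nat -> is_qk k qk -> 19/10 < qk.
Proof.
  intros Hk Hq. pose proof (qk_eq k qk ltac:(lia) Hq) as E.
  destruct Hq as [[H1 H2] _].
  destruct (Rlt_or_le (19/10) qk) as [|Hle]; [assumption|].
  exfalso.
  assert (qk ^ 4 <= qk ^ k) by (apply Rle_pow; [lra|lia]).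
  assert (qk ^ 4 * (2 - qk) > 1).
  { simpl. assert (0 < qk - 1) by lra.
    assert (qk * (qk * (qk * (qk - 1) - 1) - 1) - 1 < 0) by nra.
    nra. }
  nra.
Qed.

Theorem lemma3p5 (m k : nat) (qk q : R) :
  (4 <= k)%nat ->
  is_qk k qk ->
  Rabs (q - qk) < / qk ^ ((m + 2) * k + 3) ->
  - / qk ^ ((m + 1) * k - 1) < eps_q k q /\ eps_q k q < / qk ^ ((m + 2) * k - 1).
Proof.
  intros Hk Hq Hd.
  pose proof (qk_big k qk Hk Hq) as Hqk.
  pose proof (qk_eq k qk ltac:(lia) Hq) as E.
  assert (Hqk2 : qk < 2) by (destruct Hq as [[_ ?] _]; lra).
  set (N := ((m + 2) * k - 1)%nat).
  assert (HN : ((m + 2) * k + 3)%nat = (N + 4)%nat) by (unfold N; nia).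
  rewrite HN, pow_add in Hd.
  assert (P4 : 13 < qk ^ 4) by (simpl; assert (361/100 < qk * qk) by nra; nra).
  assert (PN : 1 <= qk ^ N) by (apply pow_R1_Rle; lra).
  assert (Hdelta : / (qk ^ N * qk ^ 4) < / 13).
  { apply Rinv_lt_contravar; nra. }
  set (d := q - qk) in *.
  assert (Hd13 : Rabs d < / 13) by lra.
  apply Rabs_def2 in Hd13 as [Hd1 Hd2].
  assert (Hq1 : 182/100 < q < 208/100) by (unfold d in *; lra).
  assert (Key : Rabs (eps_q k q) <= qk ^ 4 * Rabs d).
  { destruct k as [|[|[|[|j]]]]; try lia.
    pose proof (eps_closed (S (S j)) q ltac:(lra)) as EC. cbv zeta in EC.
    set (x := / q) in *.
    set (y := / qk).
    assert (Hx : 0 < x < 55/100).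
    { unfold x. split. apply Rinv_0_lt_compat; lra.
      apply (Rmult_lt_reg_l q); [lra|]. rewrite Rinv_r by lra. lra. }
    assert (Hy : 0 < y < 55/100).
    { unfold y. split. apply Rinv_0_lt_compat; lra.
      apply (Rmult_lt_reg_l qk); [lra|]. rewrite Rinv_r by lra. lra. }
    assert (Ey : 1 - 2 * y + y ^ S (S (S (S (S j)))) = 0).
    { unfold y.
      replace (S (S (S (S (S j))))) with (1 + S (S (S (S j))))%nat by lia.
      rewrite pow_add, pow_1, pow_inv.
      replace (/ qk ^ S (S (S (S j)))) with (2 - qk).
      - field. lra.
      - assert (qk ^ S (S (S (S j))) <> 0) by (apply pow_nonzero; lra).
        apply (Rmult_eq_reg_l (qk ^ S (S (S (S j))))); [|auto].
        rewrite Rinv_r by auto. exact E. }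
    assert (Exy : x - y = - d * x * y).
    { unfold x, y, d. field. lra. }
    pose proof (pow_diff x y (55/100) (S (S (S (S j)))) ltac:(lra) ltac:(lra)) as PD.
    pose proof (small_pow j) as SP.
    replace (j + 5)%nat with (S (S (S (S (S j))))) in SP by lia.
    replace (j + 4)%nat with (S (S (S (S j)))) in SP by lia.
    assert (PDb : Rabs (x ^ S (S (S (S (S j)))) - y ^ S (S (S (S (S j))))) <= Rabs (x - y)).
    { assert (0 <= Rabs (x - y)) by apply Rabs_pos. nra. }
    assert (Hnum : Rabs (1 - 2 * x + x ^ S (S (S (S (S j))))) <= 3 * Rabs (x - y)).
    { replace (1 - 2 * x + x ^ S (S (S (S (S j)))))
        with (-2 * (x - y) + (x ^ S (S (S (S (S j)))) - y ^ S (S (S (S (S j)))))) by lra.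
      eapply Rle_trans; [apply Rabs_triang|]. rewrite Rabs_mult.
      replace (Rabs (-2)) with 2 by (rewrite Rabs_left; lra). lra. }
    rewrite Exy, !Rabs_mult, Rabs_Ropp, (Rabs_right x), (Rabs_right y) in Hnum by lra.
    assert (Hxk : x ^ S (S (S (S j))) < x).
    { change (x ^ S (S (S (S j)))) with (x * x ^ S (S (S j))).
      assert (x ^ S (S (S j)) < 1) by (apply pow_lt_1_compat; [lra|lia]). nra. }
    assert (Hxk0 : 0 <= x ^ S (S (S (S j)))) by (apply pow_le; lra).
    set (D := (1 - x) * (1 - x ^ S (S (S (S j))))) in *.
    assert (HD : 2025/10000 <= D) by (unfold D; nra).
    rewrite <- EC, Rabs_mult, (Rabs_right D) in Hnum by lra.
    assert (0 <= Rabs (eps_q (S (S (S (S j)))) q)) by apply Rabs_pos.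
    assert (0 <= Rabs d) by apply Rabs_pos.
    assert (x * y <= 55/100 * (55/100)) by nra.
    assert (Rabs (eps_q (S (S (S (S j)))) q) * (2025/10000) <= 3 * (Rabs d * x * y)) by nra.
    nra. }
  assert (Hlt : qk ^ 4 * Rabs d < / qk ^ N).
  { rewrite Rinv_mult in Hd.
    replace (/ qk ^ N) with (qk ^ 4 * (/ qk ^ N * / qk ^ 4)) by (field; split; lra).
    apply Rmult_lt_compat_l; lra. }
  assert (Hle : / qk ^ N <= / qk ^ ((m + 1) * k - 1)).
  { apply Rinv_le_contravar. apply pow_lt; lra.
    apply Rle_pow; [lra|]. unfold N; nia. }
  pose proof (Rle_lt_trans _ _ _ Key Hlt) as KK.
  apply Rabs_def2 in KK as [A1 A2].
  split; lra.
Qed.
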